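(* Let $n,m\ge1$, $\mu>0$, $\nu>-1$, $D_{n,m}(\mu)=\{(z,w)\in\mathbb{C}^n\times\mathbb{C}^m:\|w\|^2<e^{-\mu\|z\|^2}\}$ and $\Phi(z,w)=\nu\mu\|z\|^2-\ln\left(e^{-\mu\|z\|^2}-\|w\|^2\right)$. Then for all $(z,w)\in D_{n,m}(\mu)$, $$\det\left(\frac{\partial^2\Phi}{\partial Z_i\partial\bar Z_j}\right)(z,w)=\frac{\mu^n\left[\nu+(1-\|\tilde w\|^2)^{-1}\right]^n}{(1-\|\tilde w\|^2)^{m+1}}e^{m\mu\|z\|^2},$$ where $(Z_1,\dots,Z_{n+m})=(z,w)$ and $\tilde w:=e^{\frac{\mu}{2}\|z\|^2}w$.
   Context: $\|\cdot\|$ is the standard Hermitian norm; the determinant is of the $(n+m)\times(n+m)$ complex Hessian matrix. *)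

(* Defs.v *)
From HB Require Import structures.
From mathcomp Require Import all_boot all_order all_algebra.
From mathcomp Require Import complex.
From mathcomp Require Import all_classical all_reals all_analysis.
Set Implicit Arguments. Unset Strict Implicit. Unset Printing Implicit Defensive.
Import Order.TTheory GRing.Theory Num.Theory.
Local Open Scope ring_scope.

(* A point Z of C^N is represented by its real coordinates (x, y),
   with Z_k = x_k + i y_k. *)
Definition cpt (R : realType) (N : nat) := ('rV[R]_N * 'rV[R]_N)%type.

Definition dirx (R : realType) (N : nat) (k : 'I_N) : cpt R N := (delta_mx 0 k, 0).
Definition diry (R : realType) (N : nat) (k : 'I_N) : cpt R N := (0, delta_mx 0 k).

Definition pd (R : realType) (N : nat) (f : cpt R N -> R) (v : cpt R N) : cpt R N -> R :=
  fun p => derive f p v.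

(* complex Hessian (d^2 f / dZ_i d\bar Z_j)_{i,j}, via Wirtinger derivatives
   d/dZ = (d/dx - i d/dy)/2, d/d\bar Z = (d/dx + i d/dy)/2 :
   d^2 f/dZ_i d\bar Z_j = 1/4 (f_{x_i x_j} + f_{y_i y_j}) + i/4 (f_{x_i y_j} - f_{y_i x_j}) *)
Definition cHess (R : realType) (N : nat) (f : cpt R N -> R) (p : cpt R N) : 'M[R[i]]_N :=
  \matrix_(i < N, j < N)
     Complex ((pd (pd f (@dirx R N j)) (@dirx R N i) p + pd (pd f (@diry R N j)) (@diry R N i) p) / 4)
             ((pd (pd f (@diry R N j)) (@dirx R N i) p - pd (pd f (@dirx R N j)) (@diry R N i) p) / 4).

Definition nz2 (R : realType) (n m : nat) (p : cpt R (n + m)) : R :=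
  \sum_(k < n) (p.1 0 (lshift m k) ^+ 2 + p.2 0 (lshift m k) ^+ 2).
Definition nw2 (R : realType) (n m : nat) (p : cpt R (n + m)) : R :=
  \sum_(k < m) (p.1 0 (rshift n k) ^+ 2 + p.2 0 (rshift n k) ^+ 2).

Definition Dnm (R : realType) (n m : nat) (mu : R) : set (cpt R (n + m)) :=
  [set p | nw2 p < expR (- (mu * nz2 p))].

Definition Phi (R : realType) (n m : nat) (mu nu : R) (p : cpt R (n + m)) : R :=
  nu * mu * nz2 p - ln (expR (- (mu * nz2 p)) - nw2 p).

(* Main.v *)
Require Import Defs.
From HB Require Import structures.
From mathcomp Require Import all_boot all_order all_algebra.
From mathcomp Require Import complex.
From mathcomp Require Import all_classical all_reals all_analysis.
From mathcomp Require Import ring.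
Import Order.TTheory GRing.Theory Num.Theory.
Import numFieldNormedType.Exports.
Local Open Scope ring_scope.

Module Helpers.
Set Implicit Arguments. Unset Strict Implicit. Unset Printing Implicit Defensive.

Section Rules.
Variables (R : realType) (V : normedModType R).
Implicit Types (f g : V -> R) (x v : V).

Lemma isdD f g x v df dg : is_derive x v f df -> is_derive x v g dg ->
  is_derive x v (fun y => f y + g y) (df + dg).
Proof. move=> H1 H2; exact: (is_deriveD H1 H2). Qed.
Lemma isdB f g x v df dg : is_derive x v f df -> is_derive x v g dg ->
  is_derive x v (fun y => f y - g y) (df - dg).
Proof. move=> H1 H2; exact: (is_deriveB H1 H2). Qed.
Lemma isdN f x v df : is_derive x v f df ->
  is_derive x v (fun y => - f y) (- df).
Proof. move=> H1; exact: (is_deriveN H1). Qed.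
Lemma isdM f g x v df dg : is_derive x v f df -> is_derive x v g dg ->
  is_derive x v (fun y => f y * g y) (f x * dg + g x * df).
Proof. move=> H1 H2; exact: (is_deriveM H1 H2). Qed.
Lemma isdV f x v df : f x != 0 -> is_derive x v f df ->
  is_derive x v (fun y => (f y)^-1) (- (f x) ^- 2 * df).
Proof. move=> H0 [H1 H2]; split; first exact: derivableV.
by rewrite deriveV // H2. Qed.
Lemma isdC x v (c : R) : is_derive x v (fun _ => c) 0.
Proof. exact: (is_derive_cst c). Qed.
End Rules.

Lemma isd_id (R : realType) (x v : R) : is_derive x v (fun y : R => y) v.
Proof. exact: is_derive_id. Qed.

Lemma isd_affine (R : realType) (a b : R) : is_derive (0:R) (1:R) (fun h : R => h * a + b) a.
Proof.
have := isdD (isdM (isd_id (0:R) (1:R)) (isdC (0:R) (1:R) a)) (isdC (0:R) (1:R) b).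
by rewrite mul0r mulr1 !addr0 add0r.
Qed.

Lemma isd_quad (R : realType) (a b c : R) :
  is_derive (0:R) (1:R) (fun h : R => c + h * a + h ^+ 2 * b) a.
Proof.
have H2 : is_derive (0:R) (1:R) (fun h : R => h * h * b) 0.
  move: (isdM (isdM (isd_id (0:R) (1:R)) (isd_id (0:R) (1:R))) (isdC (0:R) (1:R) b)).
  by move=> H; apply: (is_derive_eq H); ring.
have -> : (fun h : R => c + h * a + h ^+ 2 * b) = (fun h : R => c + h * a + h * h * b).
  by apply: funext => h; rewrite expr2.
move: (isdD (isdD (isdC (0:R) (1:R) c) (isdM (isd_id (0:R) (1:R)) (isdC (0:R) (1:R) a))) H2).
by move=> H; apply: (is_derive_eq H); ring.
Qed.
Section Line.
Variables (R : realType) (V : normedModType R).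

Lemma derive_line (f : V -> R) q v :
  'D_v f q = 'D_(1:R) (fun h : R => f (h *: v + q)) (0:R).
Proof.
rewrite /derive /=.
suff -> : (fun h0 : R => h0^-1 *: (f ((h0 *: (1:R) + 0) *: v + q) - f (0 *: v + q)))
   = (fun h0 : R => h0^-1 *: (f (h0 *: v + q) - f q)) by [].
apply: funext => h.
by rewrite scale0r add0r addr0 [_ *: (1:R)]mulr1.
Qed.

Lemma is_derive_line (f : V -> R) q v d :
  is_derive (0:R) (1:R) (fun h : R => f (h *: v + q)) d -> is_derive q v f d.
Proof.
move=> [H1 H2]; split; first exact/derivable1P.
by rewrite derive_line.
Qed.

Lemma is_derive_chain (f : V -> R) (g : R -> R) q v df dg :
  is_derive q v f df -> is_derive (f q) 1 g dg ->
  is_derive q v (fun x => g (f x)) (dg * df).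
Proof.
move=> [H1 H2] Hg; apply: is_derive_line.
have Hl : is_derive (0:R) (1:R) (fun h : R => f (h *: v + q)) df.
  split; first exact/(derivable1P _ _ _).1.
  by rewrite -derive_line.
have := @is_derive1_comp R g (fun h : R => f (h *: v + q)) 0 dg df.
rewrite scale0r add0r => /(_ Hg Hl); exact.
Qed.
End Line.

Section BB.
Variables (R : realType) (N : nat).
Implicit Types (q v w : cpt R N) (c : 'I_N -> R).

Definition BB c q w := \sum_(k < N) c k * (q.1 0 k * w.1 0 k + q.2 0 k * w.2 0 k).

Lemma coord1 (h : R) q v k : (h *: v + q).1 0 k = h * v.1 0 k + q.1 0 k.
Proof. by rewrite /= !mxE. Qed.
Lemma coord2 (h : R) q v k : (h *: v + q).2 0 k = h * v.2 0 k + q.2 0 k.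
Proof. by rewrite /= !mxE. Qed.

Lemma BBsym c q w : BB c q w = BB c w q.
Proof. by apply: eq_bigr => k _; ring. Qed.

Lemma BBline c (h : R) q v w : BB c (h *: v + q) w = h * BB c v w + BB c q w.
Proof.
rewrite /BB mulr_sumr -big_split /=; apply: eq_bigr => k _.
rewrite coord1 coord2; ring.
Qed.

Lemma BBquad c (h : R) q v :
  BB c (h *: v + q) (h *: v + q) = BB c q q + h * (2 * BB c q v) + h ^+ 2 * BB c v v.
Proof.
rewrite /BB !mulr_sumr -!big_split /=; apply: eq_bigr => k _.
rewrite !coord1 !coord2; ring.
Qed.

Lemma isd_BBl c q v w : is_derive q v (fun r => BB c r w) (BB c v w).
Proof.
apply: is_derive_line.
have -> : (fun h : R => BB c (h *: v + q) w) = (fun h : R => h * BB c v w + BB c q w).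
  by apply: funext => h; rewrite BBline.
exact: isd_affine.
Qed.

Lemma isd_BBq c q v : is_derive q v (fun r => BB c r r) (2 * BB c q v).
Proof.
apply: is_derive_line.
have -> : (fun h : R => BB c (h *: v + q) (h *: v + q)) =
   (fun h : R => BB c q q + h * (2 * BB c q v) + h ^+ 2 * BB c v v).
  by apply: funext => h; rewrite BBquad.
exact: isd_quad.
Qed.
End BB.

Definition cz (R : realType) n m (k : 'I_(n + m)) : R := ((k : nat) < n)%:R.
Definition cw (R : realType) n m (k : 'I_(n + m)) : R := (n <= k)%:R.

Lemma nz2E (R : realType) n m (p : cpt R (n + m)) : nz2 p = BB (@cz R n m) p p.
Proof.
rewrite /BB big_split_ord /= /nz2 [X in _ = _ + X]big1 ?addr0.
  by apply: eq_bigr => k _; rewrite /cz /= ltn_ord mul1r !expr2.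
by move=> k _; rewrite /cz /= ltnNge leq_addr mul0r.
Qed.

Lemma nw2E (R : realType) n m (p : cpt R (n + m)) : nw2 p = BB (@cw R n m) p p.
Proof.
rewrite /BB big_split_ord /= /nw2 [X in _ = X + _]big1 ?add0r.
  by apply: eq_bigr => k _; rewrite /cw /= leq_addr mul1r !expr2.
by move=> k _; rewrite /cw /= leqNgt ltn_ord mul0r.
Qed.

Section Cont.
Variables (R : realType) (N : nat).

Lemma cont_c1 k (p : cpt R N) : {for p, continuous (fun q : cpt R N => q.1 0 k)}.
Proof.
apply: (@continuous_comp _ _ _ fst (fun M : 'rV[R]_N => M 0 k)).
  exact: cvg_fst.
exact: coord_continuous.
Qed.
Lemma cont_c2 k (p : cpt R N) : {for p, continuous (fun q : cpt R N => q.2 0 k)}.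
Proof.
apply: (@continuous_comp _ _ _ snd (fun M : 'rV[R]_N => M 0 k)).
  exact: cvg_snd.
exact: coord_continuous.
Qed.

Lemma cont_sum (F : 'I_N -> cpt R N -> R) (p : cpt R N) :
  (forall k, {for p, continuous (F k)}) ->
  {for p, continuous (fun q => \sum_(k < N) F k q)}.
Proof.
move=> H.
have -> : (fun q => \sum_(k < N) F k q) = \sum_(k < N) F k.
  by apply: funext => q; rewrite fct_sumE.
apply: (big_ind (fun f : cpt R N -> R => {for p, continuous f})) => //.
- exact: cvg_cst.
- by move=> f g Hf Hg; apply: cvgD.
Qed.

Lemma cont_BB (c : 'I_N -> R) (p : cpt R N) :
  {for p, continuous (fun q => BB c q q)}.
Proof.
apply: cont_sum => k.
apply: cvgMl_tmp; apply: cvgD; apply: cvgM; (apply: cont_c1 || apply: cont_c2).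
Qed.
End Cont.

Section Phi.
Variables (R : realType) (n m : nat) (mu nu : R).
Local Notation N := (n + m)%N.
Local Notation Bz := (BB (@cz R n m)).
Local Notation Bw := (BB (@cw R n m)).
Implicit Types (p q v u : cpt R N).

Definition aa q := expR (- (mu * Bz q q)).
Definition psi q := aa q - Bw q q.
Definition dpsi v q := aa q * (- (mu * (2 * Bz q v))) - 2 * Bw q v.
Definition GG v q := nu * mu * (2 * Bz q v) - (psi q)^-1 * dpsi v q.

Lemma PhiE : @Phi R n m mu nu = fun q => nu * mu * Bz q q - ln (psi q).
Proof. by apply: funext => q; rewrite /Phi /psi /aa nz2E nw2E. Qed.

Lemma isd_aa q v : is_derive q v aa (aa q * (- (mu * (2 * Bz q v)))).
Proof.
have Hi : is_derive q v (fun r => - (mu * Bz r r)) (- (mu * (2 * Bz q v))).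
  move: (isdN (isdM (isdC q v mu) (isd_BBq (@cz R n m) q v))) => H.
  by apply: (is_derive_eq H); ring.
exact: (is_derive_chain Hi (is_derive_expR _)).
Qed.

Lemma isd_psi q v : is_derive q v psi (dpsi v q).
Proof.
move: (isdB (isd_aa q v) (isd_BBq (@cw R n m) q v)) => H.
exact: H.
Qed.

Lemma isd_Phi q v : 0 < psi q -> is_derive q v (@Phi R n m mu nu) (GG v q).
Proof.
move=> hp; rewrite PhiE.
have Hl := is_derive_chain (isd_psi q v) (is_derive1_ln hp).
move: (isdB (isdM (isdC q v (nu * mu)) (isd_BBq (@cz R n m) q v)) Hl) => H.
by apply: (is_derive_eq H); rewrite /GG; ring.
Qed.

Definition EE p v u :=
  nu * mu * (2 * Bz u v)
  - (- (psi p) ^- 2 * dpsi u p * dpsi v p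
     + (psi p)^-1 * (aa p * (- (mu * (2 * Bz u v)))
                     + aa p * (- (mu * (2 * Bz p u))) * (- (mu * (2 * Bz p v)))
                     - 2 * Bw u v)).

Lemma isd_GG p v u : 0 < psi p -> is_derive p u (GG v) (EE p v u).
Proof.
move=> hp.
have hp0 : psi p != 0 by rewrite gt_eqF.
have Hd : is_derive p u (dpsi v)
   (aa p * (- (mu * (2 * Bz u v)))
    + aa p * (- (mu * (2 * Bz p u))) * (- (mu * (2 * Bz p v))) - 2 * Bw u v).
  have H1 : is_derive p u (fun r => - (mu * (2 * Bz r v))) (- (mu * (2 * Bz u v))).
    move: (isdN (isdM (isdC p u mu) (isdM (isdC p u 2) (isd_BBl (@cz R n m) p u v)))) => H.
    by apply: (is_derive_eq H); ring.
  have H2 : is_derive p u (fun r => 2 * Bw r v) (2 * Bw u v).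
    move: (isdM (isdC p u 2) (isd_BBl (@cw R n m) p u v)) => H.
    by apply: (is_derive_eq H); ring.
  move: (isdB (isdM (isd_aa p u) H1) H2) => H.
  by apply: (is_derive_eq H); ring.
have H3 : is_derive p u (fun r => nu * mu * (2 * Bz r v)) (nu * mu * (2 * Bz u v)).
  move: (isdM (isdC p u (nu * mu)) (isdM (isdC p u 2) (isd_BBl (@cz R n m) p u v))) => H.
  by apply: (is_derive_eq H); ring.
move: (isdB H3 (isdM (isdV hp0 (isd_psi p u)) Hd)) => H.
by apply: (is_derive_eq H); rewrite /EE; ring.
Qed.

Lemma near_psi p : 0 < psi p -> \forall q \near p, 0 < psi q.
Proof.
move=> hp.
have Hc : {for p, continuous psi}.
  apply: cvgB; last exact: cont_BB.
  apply: (@continuous_comp _ _ _ (fun q => - (mu * Bz q q)) expR).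
    by apply: cvgN; apply: cvgMl_tmp; exact: cont_BB.
  exact: continuous_expR.
have := @cvgr_gt R _ (nbhs p) _ psi (psi p) Hc 0 hp. exact.
Qed.

Lemma D2 p v u : 0 < psi p ->
  pd (pd (@Phi R n m mu nu) v) u p = EE p v u.
Proof.
move=> hp; rewrite /pd.
have -> : derive (fun q => derive (@Phi R n m mu nu) q v) p u = derive (GG v) p u.
  apply: near_eq_derive.
  near=> q.
  have hq : 0 < psi q by near: q; exact: near_psi.
  by have [_ ->] := isd_Phi v hq.
by have [_ ->] := isd_GG v u hp.
Unshelve. all: by end_near.
Qed.
End Phi.

Section Alg.
Variable (F : fieldType).

Lemma sylvester N k (A : 'M[F]_(N, k)) (B : 'M[F]_(k, N)) :
  \det (1%:M + A *m B) = \det (1%:M + B *m A).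
Proof.
have E1 : block_mx 1%:M 0 (- B) 1%:M *m block_mx 1%:M A 0 (1%:M + B *m A)
        = block_mx 1%:M A (- B) 1%:M.
  rewrite mulmx_block !mul1mx !mulmx1 ?mul0mx ?mulmx0 ?addr0 ?add0r.
  by rewrite mulNmx addrC addrK.
have E2 : block_mx (1%:M + A *m B) A 0 1%:M *m block_mx 1%:M 0 (- B) 1%:M
        = block_mx 1%:M A (- B) 1%:M.
  rewrite mulmx_block !mul1mx !mulmx1 ?mul0mx ?mulmx0 ?addr0 ?add0r.
  by rewrite mulmxN addrK.
have D1 : \det (block_mx 1%:M A (- B) 1%:M) = \det (1%:M + B *m A).
  by rewrite -E1 det_mulmx det_lblock det_ublock !det1 !mul1r.
have D2 : \det (block_mx 1%:M A (- B) 1%:M) = \det (1%:M + A *m B).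
  by rewrite -E2 det_mulmx det_lblock det_ublock !det1 !mulr1.
by rewrite -D2 D1.
Qed.

Lemma det_diag_lowrank N k (d : 'rV[F]_N) (U : 'M[F]_(N, k)) (V : 'M[F]_(k, N)) :
  (forall i, d 0 i != 0) ->
  \det (diag_mx d + U *m V) =
  \prod_i d 0 i * \det (1%:M + V *m (diag_mx (\row_i (d 0 i)^-1) *m U)).
Proof.
move=> hd.
have E : diag_mx d + U *m V = diag_mx d *m (1%:M + (diag_mx (\row_i (d 0 i)^-1) *m U) *m V).
  rewrite mulmxDr mulmx1 mulmxA mulmxA; congr (_ + _ *m _).
  rewrite -mulmxA mul_diag_mx; apply/matrixP => i j; rewrite !mxE.
  under eq_bigr do rewrite !mxE.
  rewrite (bigD1 i) //= big1 ?addr0.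
    by rewrite eqxx mulr1n mulrA mulfV ?mul1r.
  by move=> l /negPf; rewrite eq_sym => ->; rewrite mulr0n mul0r.
by rewrite E det_mulmx det_diag sylvester.
Qed.

Lemma det2 (A : 'M[F]_2) : \det A = A 0 0 * A 1 1 - A 0 1 * A 1 0.
Proof.
rewrite (expand_det_row _ 0) !big_ord_recl big_ord0 addr0 /cofactor !det_mx11 !mxE /=.
rewrite expr0 expr1 mul1r mulN1r mulrN.
by congr (A _ _ * A _ _ - A _ _ * A _ _); apply: val_inj.
Qed.
End Alg.

Section Dir.
Variables (R : realType) (N : nat).
Implicit Types (q : cpt R N) (c : 'I_N -> R).

Lemma dirx1 (j k : 'I_N) : (@dirx R N j).1 0 k = (k == j)%:R.
Proof. by rewrite /dirx /= mxE. Qed.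
Lemma dirx2 (j k : 'I_N) : (@dirx R N j).2 0 k = 0.
Proof. by rewrite /dirx /= mxE. Qed.
Lemma diry1 (j k : 'I_N) : (@diry R N j).1 0 k = 0.
Proof. by rewrite /diry /= mxE. Qed.
Lemma diry2 (j k : 'I_N) : (@diry R N j).2 0 k = (k == j)%:R.
Proof. by rewrite /diry /= mxE. Qed.

Lemma BBx c q j : BB c q (@dirx R N j) = c j * q.1 0 j.
Proof.
rewrite /BB (bigD1 j) // big1 ?addr0.
  by rewrite dirx1 dirx2 eqxx /=; ring.
by move=> k /negPf hk; rewrite dirx1 dirx2 hk /=; ring.
Qed.
Lemma BBy c q j : BB c q (@diry R N j) = c j * q.2 0 j.
Proof.
rewrite /BB (bigD1 j) // big1 ?addr0.
  by rewrite diry1 diry2 eqxx /=; ring.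
by move=> k /negPf hk; rewrite diry1 diry2 hk /=; ring.
Qed.
End Dir.

Section Entries.
Variables (R : realType) (n m : nat) (mu nu : R).
Local Notation N := (n + m)%N.
Variable (p : cpt R N).
Hypothesis hp : 0 < psi mu p.
Local Notation x i := (p.1 0 i).
Local Notation y i := (p.2 0 i).
Local Notation A := (aa mu p).
Local Notation P := (psi mu p).
Definition lam (i : 'I_N) := mu * A * cz R i + cw R i.
Definition dd (i : 'I_N) := nu * mu * cz R i + lam i / P.
Definition gg (i j : 'I_N) := lam i * lam j / P ^+ 2 - mu ^+ 2 * A * cz R i * cz R j / P.

Lemma gen_cplx (T : Type) (F E : T -> T -> R) (hFE : forall v u, F v u = E v u) a b c d :
  Complex ((F a c + F b d) / 4) ((F b c - F a d) / 4) =
  Complex ((E a c + E b d) / 4) ((E b c - E a d) / 4).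
Proof. by rewrite !hFE. Qed.

Lemma entriesE i j :
  cHess (@Phi R n m mu nu) p i j =
  Complex ((j == i)%:R * dd j + gg i j * (x i * x j + y i * y j))
          (gg i j * (x i * y j - y i * x j)).
Proof.
have hP : P != 0 by rewrite gt_eqF.
rewrite /cHess mxE.
rewrite (gen_cplx (F := fun v u => pd (pd (@Phi R n m mu nu) v) u p) (E := EE mu nu p)
   (fun v u => @D2 R n m mu nu p v u hp) (dirx R j) (diry R j) (dirx R i) (diry R i)).
rewrite /EE /dpsi !BBx !BBy ?dirx1 ?dirx2 ?diry1 ?diry2.
rewrite /dd /gg /lam.
by congr Complex; field.
Qed.
End Entries.

Section Cx.
Variable R : realType.
Lemma mulcE (a b c d : R) : (Complex a b) * (Complex c d) = Complex (a * c - b * d) (a * d + b * c).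
Proof. by []. Qed.
Lemma addcE (a b c d : R) : (Complex a b) + (Complex c d) = Complex (a + c) (b + d).
Proof. by []. Qed.
Lemma realcE (a : R) : (a%:C)%C = Complex a 0.
Proof. by []. Qed.
Lemma realcV (a : R) : ((a%:C)^-1)%C = (a^-1)%:C%C.
Proof. by rewrite fmorphV. Qed.
End Cx.

Section Decomp.
Variables (R : realType) (n m : nat) (mu nu : R).
Local Notation N := (n + m)%N.
Variable (p : cpt R N).
Hypothesis hp : 0 < psi mu p.
Local Notation x i := (p.1 0 i).
Local Notation y i := (p.2 0 i).
Local Notation A := (aa mu p).
Local Notation P := (psi mu p).

Definition zeta (i : 'I_N) : R[i] := Complex (x i) (y i).
Definition zetac (i : 'I_N) : R[i] := Complex (x i) (- y i).
Definition dvec : 'rV[R[i]]_N := \row_i ((dd mu nu p i)%:C)%C.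
Definition UU : 'M[R[i]]_(N, 2) := \matrix_(i, k)
  if k == 0 then ((lam mu p i / P ^+ 2)%:C * zetac i)%C
  else ((- (mu ^+ 2 * A * cz R i / P))%:C * zetac i)%C.
Definition VV : 'M[R[i]]_(2, N) := \matrix_(k, j)
  if k == 0 then ((lam mu p j)%:C * zeta j)%C
  else ((cz R j)%:C * zeta j)%C.

Lemma decomp : cHess (@Phi R n m mu nu) p = diag_mx dvec + UU *m VV.
Proof.
apply/matrixP => i j.
rewrite entriesE // !mxE big_ord_recl big_ord1 !mxE /=.
rewrite /zeta /zetac /gg !realcE !mulcE !addcE.
case: (eqVneq i j) => [<-|hij].
  by rewrite mulr1n addcE mul1r; congr Complex; ring.
rewrite mulr0n add0r mul0r add0r.
by congr Complex; ring.
Qed.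
End Decomp.

Section Final.
Variables (R : realType) (n m : nat) (mu nu : R).
Local Notation N := (n + m)%N.
Variable (p : cpt R N).
Hypothesis hp : 0 < psi mu p.
Hypothesis hmu : 0 < mu.
Hypothesis hnu : -1 < nu.
Local Notation x i := (p.1 0 i).
Local Notation y i := (p.2 0 i).
Local Notation A := (aa mu p).
Local Notation P := (psi mu p).

Definition ww (k l : 'I_2) (i : 'I_N) : R :=
  (if k == 0 then lam mu p i else cz R i) * (dd mu nu p i)^-1 *
  (if l == 0 then lam mu p i / P ^+ 2 else - (mu ^+ 2 * A * cz R i / P)).

Lemma M_entry k l :
  (VV mu p *m (diag_mx (\row_i ((dvec mu nu p) 0 i)^-1) *m UU mu p)) k l =
  ((\sum_i ww k l i * (x i * x i + y i * y i))%:C)%C.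
Proof.
rewrite mul_diag_mx !mxE rmorph_sum; apply: eq_bigr => i _.
rewrite !mxE /ww /zeta /zetac realcV.
by case: (k == 0); case: (l == 0); rewrite !realcE !mulcE; congr Complex; ring.
Qed.

Lemma czw (i : 'I_N) : (cz R i = 1 /\ cw R i = 0) \/ (cz R i = 0 /\ cw R i = 1).
Proof.
rewrite /cz /cw; case: (ltnP i n) => h; [left|right].
  by split.
by split.
Qed.

Lemma wsum (w : 'I_N -> R) a b :
  (forall i, w i = a * cz R i + b * cw R i) ->
  \sum_i w i * (x i * x i + y i * y i) = a * BB (@cz R n m) p p + b * BB (@cw R n m) p p.
Proof.
move=> hw; rewrite /BB !mulr_sumr -big_split; apply: eq_bigr => i _.
by rewrite hw /=; ring.
Qed.

Definition Dz := nu * mu + mu * A / P.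

Lemma t_ge0 : 0 <= BB (@cw R n m) p p.
Proof.
apply: sumr_ge0 => i _; apply: mulr_ge0.
  by rewrite /cw ler0n.
by rewrite addr_ge0 // -expr2 sqr_ge0.
Qed.

Lemma hDz : Dz != 0.
Proof.
have hP : 0 < P := hp.
have E : Dz = mu * ((nu + 1) + BB (@cw R n m) p p / P).
  rewrite /Dz; have -> : A = P + BB (@cw R n m) p p by rewrite /psi; ring.
  field; exact: lt0r_neq0.
rewrite E gt_eqF // mulr_gt0 // ltr_wpDr //.
  by rewrite divr_ge0 // ?t_ge0 // ltW.
by rewrite -ltrBlDr sub0r.
Qed.

Lemma hK : nu * mu * P + mu * A != 0.
Proof.
have hP : P != 0 by rewrite gt_eqF.
have -> : nu * mu * P + mu * A = Dz * P by rewrite /Dz; field.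
by rewrite mulf_neq0 // hDz.
Qed.

Lemma ww00 i : ww 0 0 i = ((mu * A) ^+ 2 / Dz / P ^+ 2) * cz R i + P^-1 * cw R i.
Proof.
have hP : P != 0 by rewrite gt_eqF.
rewrite /ww /= /dd /lam /Dz; case: (czw i) => [[-> ->]|[-> ->]];
  rewrite ?mulr1 ?mulr0 ?addr0 ?add0r; by field; rewrite ?hP ?hK.
Qed.
Lemma ww01 i : ww 0 1 i = (- (mu * A * mu ^+ 2 * A / Dz / P)) * cz R i + 0 * cw R i.
Proof.
have hP : P != 0 by rewrite gt_eqF.
rewrite /ww /= /dd /lam /Dz; case: (czw i) => [[-> ->]|[-> ->]];
  rewrite ?mulr1 ?mulr0 ?addr0 ?add0r ?mul0r ?oppr0 ?mulr0; by field; rewrite ?hP ?hK.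
Qed.
Lemma ww10 i : ww 1 0 i = (mu * A / Dz / P ^+ 2) * cz R i + 0 * cw R i.
Proof.
have hP : P != 0 by rewrite gt_eqF.
rewrite /ww /= /dd /lam /Dz; case: (czw i) => [[-> ->]|[-> ->]];
  rewrite ?mulr1 ?mulr0 ?addr0 ?add0r ?mul0r; by field; rewrite ?hP ?hK.
Qed.
Lemma ww11 i : ww 1 1 i = (- (mu ^+ 2 * A / Dz / P)) * cz R i + 0 * cw R i.
Proof.
have hP : P != 0 by rewrite gt_eqF.
rewrite /ww /= /dd /lam /Dz; case: (czw i) => [[-> ->]|[-> ->]];
  rewrite ?mulr1 ?mulr0 ?addr0 ?add0r ?mul0r ?oppr0 ?mulr0; by field; rewrite ?hP ?hK.
Qed.

Lemma dd_neq0 i : dd mu nu p i != 0.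
Proof.
have hP : P != 0 by rewrite gt_eqF.
rewrite /dd /lam; case: (czw i) => [[-> ->]|[-> ->]];
  rewrite ?mulr1 ?mulr0 ?addr0 ?add0r.
  by have := hDz; rewrite /Dz.
by rewrite div1r invr_neq0.
Qed.

Lemma oppcE (a b : R) : - (Complex a b) = Complex (- a) (- b).
Proof. by []. Qed.

Lemma det_main : \det (cHess (@Phi R n m mu nu) p) =
  (((\prod_i dd mu nu p i) * (A / P))%:C)%C.
Proof.
have hP : P != 0 by rewrite gt_eqF.
rewrite decomp // det_diag_lowrank; last by move=> i; rewrite mxE; apply/eqP => -[]; apply/eqP/dd_neq0.
have E k l : (1%:M + VV mu p *m (diag_mx (\row_i ((dvec mu nu p) 0 i)^-1) *m UU mu p)) k l =
   ((((k == l)%:R + \sum_i ww k l i * (x i * x i + y i * y i)))%:C)%C.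
  by rewrite mxE M_entry mxE rmorphD rmorph_nat.
rewrite det2 !E.
under eq_bigr do rewrite mxE.
rewrite -rmorph_prod -!rmorphM -rmorphB -rmorphM; apply: congr1.
rewrite (wsum (w := ww 0 0) ww00) (wsum (w := ww 0 1) ww01).
rewrite (wsum (w := ww 1 0) ww10) (wsum (w := ww 1 1) ww11) /=.
have ht : BB (@cw R n m) p p = A - P by rewrite /psi; ring.
rewrite ht /Dz.
congr (_ * _).
have hD := hDz; rewrite /Dz in hD.
by field; rewrite hP hK.
Qed.
End Final.

End Helpers.
Import Helpers.

Lemma prod_dd (R : realType) (n m : nat) (mu nu : R) (p : cpt R (n + m)) :
  \prod_i dd mu nu p i = (Dz mu nu p) ^+ n * ((psi mu p)^-1) ^+ m.
Proof.
rewrite big_split_ord /=.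
have -> : \prod_(i < n) dd mu nu p (lshift m i) = \prod_(i < n) Dz mu nu p.
  apply: eq_bigr => i _; rewrite /dd /lam /cz /cw /Dz /= ltn_ord leqNgt ltn_ord /=.
  by ring.
have -> : \prod_(i < m) dd mu nu p (rshift n i) = \prod_(i < m) (psi mu p)^-1.
  apply: eq_bigr => i _; rewrite /dd /lam /cz /cw /= leq_addr ltnNge leq_addr /=.
  by ring.
by rewrite !prodr_const !card_ord.
Qed.

Theorem lemma2p3 (R : realType) (n m : nat) (mu nu : R) :
  (0 < n)%N -> (0 < m)%N -> 0 < mu -> -1 < nu ->
  forall p : cpt R (n + m), p \in @Dnm R n m mu ->
  \det (cHess (@Phi R n m mu nu) p) =
  Complex (mu ^+ n * (nu + (1 - expR (mu * @nz2 R n m p) * @nw2 R n m p)^-1) ^+ n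
             / (1 - expR (mu * @nz2 R n m p) * @nw2 R n m p) ^+ m.+1
             * expR (m%:R * mu * @nz2 R n m p)) 0.
Proof.
move=> hn hm hmu hnu p hpD.
have hp : 0 < psi mu p.
  move: hpD; rewrite in_setE /Dnm /= => hpD.
  by rewrite /psi /aa -nz2E -nw2E subr_gt0.
rewrite (det_main hp hmu hnu) realcE; congr Complex.
rewrite prod_dd /Dz /psi /aa -nz2E -nw2E.
move: hp; rewrite /psi /aa -nz2E -nw2E.
set s := nz2 p; set t := nw2 p => hp.
rewrite -[m%:R * mu * s]mulrA expRM_natl expRN; rewrite expRN in hp.
set E := expR (mu * s).
have hE : E != 0 by rewrite gt_eqF // expR_gt0.
set P := E^-1 - t.
have hP : P != 0 by rewrite gt_eqF.
have h1 : 1 - E * t = E * P by rewrite /P; field.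
rewrite h1.
have -> : nu * mu + mu * E^-1 / P = mu * (nu + (E * P)^-1) by field; rewrite ?hE ?hP.
rewrite exprMn exprS exprMn exprVn.
have hEm : E ^+ m != 0 by rewrite expf_neq0.
have hPm : P ^+ m != 0 by rewrite expf_neq0.
by field; rewrite hPm hEm hP hE.
Qed.
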